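(* If $X$ is a pseudocompact space and $G$ is an NSS group, then $C_p(X,G)$ is TAP.
   Context: All spaces are Tychonoff and non-empty; all topological groups are Hausdorff. $C_p(X,G)$ is the group of all continuous maps $X\to G$ with pointwise group operations and the topology of pointwise convergence. A topological group is NSS if some open neighborhood of the identity contains no nontrivial subgroup. A subset $A$ of a topological group $H$ is absolutely productive in $H$ if for every injection $a:\mathbb{N}\to A$ and every map $z:\mathbb{N}\to\mathbb{Z}$ the sequence $\left(\prod_{n=0}^{k}a(n)^{z(n)}\right)_{k\in\mathbb{N}}$ converges in $H$; $H$ is TAP if every absolutely productive subset of $H$ is finite. *)

(* Defs.v *)
From HB Require Import structures.
From mathcomp Require Import all_boot all_order all_algebra.
From mathcomp Require Import all_classical all_reals all_analysis.
From mathcomp Require Import Rstruct Rstruct_topology.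
Set Implicit Arguments. Unset Strict Implicit. Unset Printing Implicit Defensive.
Import Order.TTheory GRing.Theory Num.Theory.
Local Open Scope classical_set_scope.
Local Open Scope ring_scope.

Record topGroup (G : topologicalType) := TopGroup {
  tg_mul : G -> G -> G;
  tg_inv : G -> G;
  tg_one : G;
  tg_mulA : forall x y z, tg_mul x (tg_mul y z) = tg_mul (tg_mul x y) z;
  tg_mul1g : forall x, tg_mul tg_one x = x;
  tg_mulVg : forall x, tg_mul (tg_inv x) x = tg_one;
  tg_mul_cont : continuous (fun p : G * G => tg_mul p.1 p.2);
  tg_inv_cont : continuous tg_inv
}.

Definition zpow {T : Type} (mul : T -> T -> T) (inv : T -> T) (one : T)
  (g : T) (z : int) : T :=
  match z with
  | Posz n => iter n (mul g) one
  | Negz n => inv (iter n.+1 (mul g) one)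
  end.

Fixpoint partial_prod {T : Type} (mul : T -> T -> T) (inv : T -> T) (one : T)
  (a : nat -> T) (z : nat -> int) (k : nat) : T :=
  match k with
  | 0 => zpow mul inv one (a 0) (z 0)
  | k'.+1 => mul (partial_prod mul inv one a z k') (zpow mul inv one (a k) (z k))
  end.

(* absolutely productive subset of a group (mul, inv, one) whose topology is
   described by its convergence of sequences [conv u l] ("u converges to l") *)
Definition abs_productive {T : Type} (mul : T -> T -> T) (inv : T -> T) (one : T)
  (conv : (nat -> T) -> T -> Prop) (A : set T) : Prop :=
  forall (a : nat -> T) (z : nat -> int),
    injective a -> (forall n, A (a n)) ->
    exists l : T, conv (partial_prod mul inv one a z) l.

Definition is_subgroup {G : topologicalType} (gs : topGroup G) (H : set G) :=
  H (tg_one gs) /\ (forall x y, H x -> H y -> H (tg_mul gs x y)) /\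
  (forall x, H x -> H (tg_inv gs x)).

Definition NSS {G : topologicalType} (gs : topGroup G) : Prop :=
  exists U : set G, open U /\ U (tg_one gs) /\
    forall H : set G, is_subgroup gs H -> H `<=` U -> H = [set tg_one gs].

(* Convergence in the topology of pointwise convergence (the subspace topology
   of the product topology G^X): the limit is an element of C_p(X,G), i.e.
   a continuous map, and the sequence converges to it at every point. *)
Definition cp_mul {X G : topologicalType} (gs : topGroup G) (f g : X -> G) : X -> G :=
  fun x => tg_mul gs (f x) (g x).
Definition cp_inv {X G : topologicalType} (gs : topGroup G) (f : X -> G) : X -> G :=
  fun x => tg_inv gs (f x).
Definition cp_one {X G : topologicalType} (gs : topGroup G) : X -> G :=
  fun _ => tg_one gs.
Definition cp_conv {X G : topologicalType} (u : nat -> X -> G) (l : X -> G) : Prop :=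
  continuous l /\ forall x : X, (fun k => u k x) @ \oo --> l x.

Definition Cp_TAP (X G : topologicalType) (gs : topGroup G) : Prop :=
  forall A : set (X -> G), A `<=` [set f | continuous f] ->
    abs_productive (@cp_mul X G gs) (@cp_inv X G gs) (@cp_one X G gs)
                   (@cp_conv X G) A ->
    finite_set A.

Definition pseudocompact (X : topologicalType) : Prop :=
  forall f : X -> Rdefinitions.R, continuous f ->
    exists M : Rdefinitions.R, forall x, `|f x| <= M.

Definition tychonoff_space (X : topologicalType) : Prop :=
  hausdorff_space X /\ completely_regular_space X.

(* Main.v *)
Require Import Defs.
From mathcomp Require Import all_boot all_order all_algebra.
From mathcomp Require Import all_classical all_reals all_analysis.
From mathcomp Require Import Rstruct Rstruct_topology zify.
Set Implicit Arguments. Unset Strict Implicit. Unset Printing Implicit Defensive.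
Import Order.TTheory GRing.Theory Num.Theory.

Module Part0.

Local Open Scope classical_set_scope.

Section Grp.
Variables (G : topologicalType) (gs : topGroup G).
Local Notation mul := (tg_mul gs).
Local Notation inv := (tg_inv gs).
Local Notation one := (tg_one gs).
Local Notation zp := (zpow mul inv one).

Lemma gmulA x y z : mul x (mul y z) = mul (mul x y) z. Proof. exact: tg_mulA. Qed.
Lemma gmul1 x : mul one x = x. Proof. exact: tg_mul1g. Qed.
Lemma gmulV x : mul (inv x) x = one. Proof. exact: tg_mulVg. Qed.

Lemma gmulVr x : mul x (inv x) = one.
Proof.
have h : mul (inv (inv x)) (inv x) = one by rewrite gmulV.
rewrite -[in LHS](gmul1 (mul x (inv x))) -h -gmulA (gmulA (inv x)) gmulV gmul1.
by rewrite gmulV.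
Qed.

Lemma gmulr1 x : mul x one = x.
Proof. by rewrite -(gmulV x) gmulA gmulVr gmul1. Qed.

Lemma gmulKV x y : mul (inv x) (mul x y) = y.
Proof. by rewrite gmulA gmulV gmul1. Qed.

Lemma gmulKr x y : mul x (mul (inv x) y) = y.
Proof. by rewrite gmulA gmulVr gmul1. Qed.

Lemma gmulrK x y : mul (mul x y) (inv y) = x.
Proof. by rewrite -gmulA gmulVr gmulr1. Qed.

Lemma ginv_uniq a b : mul a b = one -> b = inv a.
Proof. by move=> h; rewrite -(gmulKV a b) h gmulr1. Qed.

Lemma ginv1 : inv one = one.
Proof. by rewrite -(gmulr1 (inv one)) gmulV. Qed.

Lemma ginvM a b : inv (mul a b) = mul (inv b) (inv a).
Proof.
symmetry; apply: ginv_uniq.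
by rewrite -gmulA (gmulA b) gmulVr gmul1 gmulVr.
Qed.

Definition npow (g : G) n := iter n (mul g) one.

Lemma npow_comm g n : mul g (npow g n) = mul (npow g n) g.
Proof.
elim: n => [|n IH]; first by rewrite /npow /= gmulr1 gmul1.
by rewrite /npow !iterS -/(npow g n) {1}IH gmulA.
Qed.

Lemma zp_succ g z : zp g (z + 1) = mul (zp g z) g.
Proof.
case: z => n.
- have -> : (Posz n + 1 = Posz n.+1)%R by lia.
  by rewrite /zpow iterS -/(npow g n) npow_comm.
- case: n => [|k].
  + have -> : (Negz 0 + 1 = Posz 0)%R by lia.
    by rewrite /zpow /= gmulr1 gmulV.
  + have -> : (Negz k.+1 + 1 = Negz k)%R by lia.
    by rewrite /zpow [in RHS]iterS ginvM -gmulA gmulV gmulr1.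
Qed.

Lemma zp_pred g z : zp g (z - 1) = mul (zp g z) (inv g).
Proof.
have := zp_succ g (z - 1); rewrite subrK => ->.
by rewrite gmulrK.
Qed.

Lemma zpD g a b : zp g (a + b) = mul (zp g a) (zp g b).
Proof.
case: b => n.
- elim: n => [|n IH]; first by rewrite addr0 /= gmulr1.
  have -> : (a + Posz n.+1 = (a + Posz n) + 1)%R by lia.
  rewrite zp_succ IH -gmulA -zp_succ.
  by have -> : (Posz n + 1 = Posz n.+1)%R by lia.
- elim: n => [|n IH].
  + have -> : (a + Negz 0 = a - 1)%R by lia.
    by rewrite zp_pred /= gmulr1.
  + have -> : (a + Negz n.+1 = (a + Negz n) - 1)%R by lia.
    rewrite zp_pred IH -gmulA -zp_pred.
    by have -> : (Negz n - 1 = Negz n.+1)%R by lia.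
Qed.

Lemma zpN g a : zp g (- a) = inv (zp g a).
Proof. by apply: ginv_uniq; rewrite -zpD subrr. Qed.

Lemma zp1 g : zp g 1 = g.
Proof. by rewrite /= gmulr1. Qed.

Lemma zp_one k : zp one k = one.
Proof.
have h : forall n, iter n (mul one) one = one.
  by elim=> [|n IH] //=; rewrite IH gmul1.
by case: k => n; rewrite /zpow h ?ginv1.
Qed.

Lemma nss_pow (U : set G) :
  (forall H : set G, is_subgroup gs H -> H `<=` U -> H = [set one]) ->
  forall g, g <> one -> exists k, ~ U (zp g k).
Proof.
move=> hU g gne; apply: contra_notP gne => /forallNP hk.
have hk' : forall k, U (zp g k) by move=> k; exact: contrapT (hk k).
pose P := [set h | exists k, h = zp g k].
have sP : is_subgroup gs P.
  split; first by exists 0%R.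
  split; first by move=> x y [a ->] [b ->]; exists (a + b)%R; rewrite zpD.
  by move=> x [a ->]; exists (- a)%R; rewrite zpN.
have HP : P = [set one] by apply: hU => // h [k ->]; exact: hk'.
have : P g by exists 1%R; rewrite zp1.
by rewrite HP.
Qed.

Lemma cvg_gmul (T : Type) (F : set_system T) (FF : Filter F) (f h : T -> G) a b :
  f @ F --> a -> h @ F --> b -> (fun t => mul (f t) (h t)) @ F --> mul a b.
Proof.
move=> fa hb; apply: (cvg_comp2 fa hb).
exact: (@tg_mul_cont _ gs (a, b)).
Qed.

Lemma cvg_ginv (T : Type) (F : set_system T) (FF : Filter F) (f : T -> G) a :
  f @ F --> a -> (fun t => inv (f t)) @ F --> inv a.
Proof. by move=> fa; apply: continuous_cvg => //; exact: tg_inv_cont. Qed.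

Lemma cvg_zp (T : Type) (F : set_system T) (FF : Filter F) (f : T -> G) a k :
  f @ F --> a -> (fun t => zp (f t) k) @ F --> zp a k.
Proof.
move=> fa.
have hit : forall n, (fun t => iter n (mul (f t)) one) @ F --> iter n (mul a) one.
  elim=> [|n IH] /=; first exact: cvg_cst.
  exact: cvg_gmul.
by case: k => n; rewrite /zpow; [exact: hit | apply: cvg_ginv; exact: hit].
Qed.

Lemma near_gmul (W : set G) : nbhs one W ->
  exists A B, [/\ nbhs one A, nbhs one B & forall a b, A a -> B b -> W (mul a b)].
Proof.
move=> nW.
have nW' : nbhs (mul one one) W by rewrite gmul1.
have := @tg_mul_cont _ gs (one, one) _ nW'.
case=> -[A B] /= [nA nB] sub.
exists A, B; split => // a b Aa Bb.
exact: (sub (a, b)).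
Qed.

Lemma near_ginv (W : set G) : nbhs one W -> nbhs one (inv @^-1` W).
Proof.
move=> nW.
have nW' : nbhs (inv one) W by rewrite ginv1.
exact: (@tg_inv_cont _ gs one _ nW').
Qed.

Lemma closure_sub (U : set G) : nbhs one U ->
  exists U0, nbhs one U0 /\ closure U0 `<=` U.
Proof.
move=> /near_gmul [A [B [nA nB sub]]].
exists A; split => // g Hg.
have nN : nbhs g [set h | B (mul (inv h) g)].
  have c : (fun h => mul (inv h) g) @ nbhs g --> mul (inv g) g.
    apply: cvg_gmul; [apply: cvg_ginv; exact: cvg_id | exact: cvg_cst].
  rewrite gmulV in c; exact: c nB.
have [h [Ah Bh]] : A `&` [set h | B (mul (inv h) g)] !=set0.
  exact: Hg nN.
by rewrite -(gmulKr h g); apply: sub.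
Qed.

Fixpoint Qp (s : nat -> G) (k : nat) : G :=
  match k with 0 => one | k'.+1 => mul (Qp s k') (s k') end.

Lemma PPQ (b : nat -> G) (z : nat -> int) k :
  partial_prod mul inv one b z k = Qp (fun i => zp (b i) (z i)) k.+1.
Proof. by elim: k => [|k IH] /=; [rewrite gmul1 | rewrite IH]. Qed.

Lemma Qshift s m k : Qp s (m + k) = mul (Qp s m) (Qp (fun i => s (m + i)) k).
Proof.
elim: k => [|k IH]; first by rewrite addn0 /= gmulr1.
by rewrite addnS /= IH gmulA.
Qed.

Lemma Qext s s' k : (forall i, (i < k)%N -> s i = s' i) -> Qp s k = Qp s' k.
Proof.
elim: k => [|k IH] // h /=.
by rewrite IH ?h // => i ik; apply: h; exact: ltnW.
Qed.

Lemma Qone s k : (forall i, (i < k)%N -> s i = one) -> Qp s k = one.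
Proof.
elim: k => [|k IH] // h /=.
by rewrite IH ?h ?gmul1 // => i ik; apply: h; exact: ltnW.
Qed.

Lemma Qconst s N : (forall i, (N <= i)%N -> s i = one) ->
  forall k, (N <= k)%N -> Qp s k = Qp s N.
Proof.
move=> h; elim=> [|k IH]; first by rewrite leqn0 => /eqP ->.
rewrite leq_eqVlt => /orP[/eqP <- //|].
rewrite ltnS => Nk /=; rewrite IH // h // gmulr1 //.
Qed.

Hypothesis hG : hausdorff_space G.

Lemma lim_evconst s L N : (fun k => Qp s k.+1) @ \oo --> L ->
  (forall i, (N <= i)%N -> s i = one) -> L = Qp s N.
Proof.
move=> hL hs.
have c : (fun k => Qp s k.+1) @ \oo --> Qp s N.
  apply: cvg_near_cst; exists N => // k /= Nk.
  exact: (Qconst hs (leqW Nk)).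
exact: (cvg_unique hG hL c).
Qed.

Lemma lim_shift s L L' m : (fun k => Qp s k.+1) @ \oo --> L ->
  (fun k => Qp (fun i => s (m + i)) k.+1) @ \oo --> L' ->
  L = mul (Qp s m) L'.
Proof.
move=> hL hL'.
have c : (fun k => Qp s (k + m).+1) @ \oo --> mul (Qp s m) L'.
  have -> : (fun k => Qp s (k + m).+1) = (fun k => mul (Qp s m) (Qp (fun i => s (m + i)) k.+1)).
    by apply: funext => k; rewrite -Qshift addnC addnS.
  by apply: cvg_gmul => //; exact: cvg_cst.
have c2 : (fun k => Qp s (k + m).+1) @ \oo --> L.
  have sh : (fun k => (k + m)%N) @ \oo --> \oo.
    move=> P [N _ hN]; exists N => // k /= Nk; apply: hN.
    by rewrite /= (leq_trans Nk) // leq_addr.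
  exact: (cvg_comp _ _ sh hL).
exact: (cvg_unique hG c2 c).
Qed.

End Grp.

End Part0.
Import Part0.

Module Part1.
Local Open Scope classical_set_scope.

Section Cp.
Variables (X G : topologicalType) (gs : topGroup G).
Local Notation mul := (tg_mul gs).
Local Notation inv := (tg_inv gs).
Local Notation one := (tg_one gs).
Local Notation zp := (zpow mul inv one).
Local Notation Q := (Qp gs).

Lemma cp_iter (f : X -> G) n y :
  iter n (cp_mul gs f) (cp_one gs) y = iter n (mul (f y)) one.
Proof. by elim: n => [|n IH] //=; rewrite /cp_mul IH. Qed.

Lemma cp_zpow (f : X -> G) k y :
  zpow (cp_mul gs) (cp_inv gs) (cp_one gs) f k y = zp (f y) k.
Proof. by case: k => n; rewrite /zpow; [rewrite cp_iter | rewrite /cp_inv cp_iter]. Qed.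

Lemma cp_pp (a : nat -> X -> G) z k y :
  partial_prod (cp_mul gs) (cp_inv gs) (cp_one gs) a z k y =
  Q (fun i => zp (a i y) (z i)) k.+1.
Proof.
elim: k => [|k IH] /=; first by rewrite cp_zpow gmul1.
by rewrite /cp_mul IH cp_zpow.
Qed.

Lemma cont_zp (f : X -> G) k : continuous f -> continuous (fun y => zp (f y) k).
Proof. by move=> cf y; apply: cvg_zp; exact: cf. Qed.

Lemma cont_Q (c : nat -> X -> G) (w : nat -> int) k :
  (forall i, continuous (c i)) ->
  continuous (fun y => Q (fun i => zp (c i y) (w i)) k).
Proof.
move=> cc; elim: k => [|k IH] y /=; first exact: cvg_cst.
apply: cvg_gmul; first exact: IH.
exact: cont_zp.
Qed.

Hypothesis hG : hausdorff_space G.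
Variables (U : set G) (A : set (X -> G)).
Hypothesis oU : open U.
Hypothesis U1 : U one.
Hypothesis nssU : forall H : set G, is_subgroup gs H -> H `<=` U -> H = [set one].
Hypothesis abP : abs_productive (cp_mul gs) (cp_inv gs) (cp_one gs) (@cp_conv X G) A.

Lemma evone (b : nat -> X -> G) : injective b -> (forall n, A (b n)) ->
  forall y, exists N, forall n, (N <= n)%N -> b n y = one.
Proof.
move=> ib Ab y; apply: contrapT => hnot.
have hz : forall n, exists k, b n y <> one -> ~ U (zp (b n y) k).
  move=> n; have [e|ne] := pselect (b n y = one); first by exists 0%R.
  by have [k hk] := nss_pow nssU ne; exists k.
have [z hzz] := choice hz.
have [l [_ hl]] := abP z ib Ab.
pose s := fun i => zp (b i y) (z i).
have c1 : (fun k => Q s k.+1) @ \oo --> l y.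
  have := hl y; apply: cvg_trans; apply: near_eq_cvg; apply: nearW => k.
  by rewrite cp_pp.
have c0 : (fun k => Q s k) @ \oo --> l y.
  move=> W /c1 [N _ hN]; exists N.+1 => // k /= Nk.
  case: k Nk => [//|k] Nk.
  exact: hN.
have cs : (fun k => mul (inv (Q s k)) (Q s k.+1)) @ \oo --> one.
  rewrite -(gmulV gs (l y)); apply: cvg_gmul => //; exact: cvg_ginv.
have : \forall k \near \oo, U (mul (inv (Q s k)) (Q s k.+1)).
  by apply: cs; apply: open_nbhs_nbhs; split.
case=> N _ hN; apply: hnot; exists N => n Nn.
apply: contrapT => ne; apply: (hzz n ne).
by have := hN n Nn; rewrite /= gmulKV.
Qed.

End Cp.

End Part1.
Import Part1.

Module Part2.
Local Open Scope classical_set_scope.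
Local Open Scope ring_scope.

Local Notation R := Rdefinitions.R.

Lemma sum_trunc (F : nat -> R) n m : (n <= m)%N -> (forall i, (n <= i)%N -> F i = 0) ->
  \sum_(i < m) F i = \sum_(i < n) F i.
Proof.
move=> nm h.
rewrite -!(big_mkord xpredT) (big_cat_nat (leq0n n) nm) /=.
rewrite [X in _ + X]big1_seq ?addr0 // => i /andP[_].
by rewrite mem_index_iota => /andP[ni _]; exact: h.
Qed.

Lemma cont_sum (X : topologicalType) (g : nat -> X -> R) n :
  (forall i, continuous (g i)) -> continuous (fun z => \sum_(i < n) g i z).
Proof.
move=> cg; elim: n => [|n IH] x.
  have -> : (fun z => \sum_(i < 0) g i z) = fun=> 0 by apply: funext => z; rewrite big_ord0.
  exact: cvg_cst.
have -> : (fun z => \sum_(i < n.+1) g i z) = (fun z => \sum_(i < n) g i z) + g n.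
  by apply: funext => z; rewrite big_ord_recr.
apply: (@cvgD R R^o X (nbhs x) _ (fun z => \sum_(i < n) g i z) (g n)); [exact: IH | exact: cg].
Qed.

Lemma pc_cluster (X : topologicalType) : completely_regular_space X -> pseudocompact X ->
  forall (y : nat -> X) (O : nat -> set X), (forall j, @nbhs X X (y j) (O j)) ->
  exists x : X, forall N, @nbhs X X x N -> forall K, exists j, (K <= j)%N /\ exists z, O j z /\ N z.
Proof.
move=> crs pc y O nO; apply: contrapT => hno.
have hNK : forall x : X, exists NK : set X * nat, nbhs x NK.1 /\
    forall j, (NK.2 <= j)%N -> forall z, O j z -> ~ NK.1 z.
  move=> x; apply: contrapT => hx; apply: hno; exists x => N nN K.
  apply: contrapT => hK; apply: hx; exists (N, K); split => // j Kj z Oz Nz.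
  by apply: hK; exists j; split => //; exists z.
have [NK hNKf] := choice hNK.
have hB : forall j, exists B : set X, [/\ open B, B (y j) & B `<=` O j].
  move=> j; have := nO j; rewrite nbhsE => -[B [oB By] BO].
  by exists B.
have [B hBf] := choice hB.
have hf : forall j, exists f : X -> R, [/\ continuous f, range f `<=` `[0, 1],
                           f @` [set y j] `<=` [set 0] & f @` (~` B j) `<=` [set 1]].
  move=> j; have [oB By _] := hBf j.
  apply/(@uniform_separatorP _ R); apply: crs; first exact: open_closedC.
  by move=> /(_ By).
have [f hff] := choice hf.
pose g j z := 1 - f j z.
have gcont : forall j, continuous (g j).
  move=> j z; have [cf _ _ _] := hff j.
  apply: (@cvgB R R^o X (nbhs z) _ (fun=> 1) (f j)); [exact: cvg_cst | exact: cf].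
have gy : forall j, g j (y j) = 1.
  move=> j; have [_ _ hy _] := hff j.
  by rewrite /g (hy (f j (y j))) ?subr0 //; exists (y j).
have g0 : forall j z, ~ O j z -> g j z = 0.
  move=> j z nz; have [_ _ _ hb] := hff j.
  rewrite /g (hb (f j z)) ?subrr //; exists z => //.
  by move=> Bz; apply: nz; have [_ _ BO] := hBf j; exact: BO.
have gge0 : forall j z, 0 <= g j z.
  move=> j z; have [_ hr _ _] := hff j.
  have := hr (f j z); rewrite /= in_itv /= => /(_ _)/Wrap[]; first by exists z.
  by move=> /andP[_ h1]; rewrite /g subr_ge0.
pose K z := (NK z).2.
have gK : forall z w, (NK z).1 w -> forall i, (K z <= i)%N -> g i w = 0.
  move=> z w Nw i Ki; apply: g0 => Ow.
  by have [_ h] := hNKf z; exact: (h i Ki w Ow Nw).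
pose h z := \sum_(i < K z) i%:R * g i z.
have hc : continuous h.
  move=> x.
  pose phi z := \sum_(i < K x) i%:R * g i z.
  have cphi : continuous phi.
    apply: (@cont_sum X (fun i z => i%:R * g i z)) => i z.
    apply: (@cvgM R X (nbhs z) _ (fun=> i%:R) (g i)); [exact: cvg_cst | exact: gcont].
  have eq : \forall z \near x, h z = phi z.
    have [nx _] := hNKf x.
    apply: filterS nx => z Nz.
    rewrite /h /phi.
    have Nzz : (NK z).1 z by apply: nbhs_singleton; have [nz _] := hNKf z.
    case: (leqP (K z) (K x)) => hk.
      rewrite (@sum_trunc (fun i => i%:R * g i z) _ _ hk) // => i hi.
      by rewrite (gK z z Nzz i hi) mulr0.
    rewrite (@sum_trunc (fun i => i%:R * g i z) _ _ (ltnW hk)) // => i hi.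
    by rewrite (gK x z Nz i hi) mulr0.
  have hx : h x = phi x by exact: (nbhs_singleton eq).
  have c : h @ x --> phi x.
    apply: cvg_trans (cphi x).
    by apply: near_eq_cvg; apply: filterS eq => z ->.
  by move=> W; rewrite hx; exact: c.
have [M hM] := pc h hc.
have M0 : 0 <= M by apply: le_trans (hM (y 0)).
pose j := Num.Def.archi_bound M.
have jM : M < j%:R := archi_boundP M0.
have jK : (j < K (y j))%N.
  rewrite ltnNge; apply/negP => hk.
  have nyy : (NK (y j)).1 (y j).
    by apply: nbhs_singleton; have [nz _] := hNKf (y j).
  have := gK (y j) (y j) nyy j hk.
  by rewrite gy => /eqP; rewrite oner_eq0.
have : (j%:R : R) <= h (y j).
  rewrite /h (bigD1 (Ordinal jK)) //= gy mulr1 lerDl.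
  by apply: sumr_ge0 => i _; rewrite mulr_ge0 // ler0n.
move=> hj; have := hM (y j).
have := lt_le_trans jM hj.
move=> h1 h2; have := le_lt_trans h2 h1.
by rewrite ltNge ler_norm.
Qed.

End Part2.
Import Part2.

Module Part3.
Local Open Scope classical_set_scope.

Lemma inj_of_inf (T : Type) (A : set T) : infinite_set A -> exists a : nat -> T, injective a /\ forall n, A (a n).
Proof.
move=> /infiniteP; rewrite /card_le => /asboolP [f].
pose g (n : nat) : T := proj1_sig (f (exist (fun x : nat => x \in [set: nat]) n (mem_set I))).
exists g; split.
- move=> m n /val_inj /(inj (in_setT _) (in_setT _)) h.
  by move: h => /(congr1 val).
- move=> n; rewrite /g; apply: set_mem; exact: (proj2_sig (f _)).
Qed.

Lemma dep_choice (T : Type) (d : T) (P : nat -> (nat -> T) -> T -> Prop) :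
  (forall j h, exists t, P j h t) ->
  exists s : nat -> T, forall j, P j (fun i => if (i < j)%N then s i else d) (s j).
Proof.
move=> hP.
have [ch hch] := choice (fun jh : nat * (nat -> T) => hP jh.1 jh.2).
pose fix H j : nat -> T := match j with
  | 0 => fun _ => d
  | j'.+1 => fun i => if (i < j')%N then H j' i else if i == j' then ch (j', H j') else d
  end.
pose s i := ch (i, H i).
have eH : forall j, H j = (fun i => if (i < j)%N then s i else d).
  elim=> [|j IH]; first by apply: funext => i.
  apply: funext => i /=; rewrite IH.
  case: (ltngtP i j) => [ij|ji|->]; first by rewrite ltnS ltnW.
  - have h1 : (i < j)%N = false by rewrite ltnNge ltnW.
    have h2 : (i < j.+1)%N = false by rewrite ltnNge ji.
    by rewrite h2.
  - by rewrite ltnSn /s IH.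
exists s => j; rewrite -eH; exact: (hch (j, H j)).
Qed.

Lemma nbhs_fin (X : topologicalType) (x : X) (P : nat -> set X) j :
  (forall J, (J <= j)%N -> nbhs x (P J)) ->
  nbhs x [set y | forall J, (J <= j)%N -> P J y].
Proof.
elim: j => [|j IH] h.
  apply: filterS (h 0 (leqnn 0)) => y Py J; rewrite leqn0 => /eqP ->; exact: Py.
apply: filterS (filterI (IH (fun J hJ => h J (leqW hJ))) (h j.+1 (leqnn _))).
move=> y [h1 h2] J; rewrite leq_eqVlt => /orP[/eqP -> //|]; rewrite ltnS; exact: h1.
Qed.

Lemma bound_fin (F : nat -> nat) j : exists M, forall i, (i < j)%N -> (F i <= M)%N.
Proof.
elim: j => [|j [M hM]]; first by exists 0.
exists (maxn M (F j)) => i; rewrite ltnS leq_eqVlt => /orP[/eqP ->|ij].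
  exact: leq_maxr.
exact: leq_trans (hM i ij) (leq_maxl _ _).
Qed.

End Part3.
Import Part3.

Local Open Scope classical_set_scope.

Local Notation zp gs := (zpow (tg_mul gs) (tg_inv gs) (tg_one gs)).

Theorem theorem6p3 (X G : topologicalType) (gs : topGroup G) :
  tychonoff_space X -> (exists x : X, True) -> pseudocompact X ->
  hausdorff_space G -> NSS gs ->
  Cp_TAP X gs.
Proof.
move=> [_ crs] _ pc hG [U [oU [U1 nssU]]] A Acont abP.
apply: contrapT => Ainf.
have [a0 [ia0 Aa0]] := inj_of_inf Ainf.
have [a1 [ia1 [Aa1 na1]]] : exists a1 : nat -> X -> G, injective a1 /\
    (forall n, A (a1 n)) /\ forall n, a1 n <> cp_one gs.
  case: (pselect (exists n0, a0 n0 = cp_one gs)) => [[n0 hn0]|hno].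
    exists (fun n => a0 (n + n0.+1)); split; [|split].
    - by move=> m n /ia0 /eqP; rewrite eqn_add2r => /eqP.
    - by move=> n; exact: Aa0.
    - move=> n h; have := ia0 _ _ (etrans h (esym hn0)); lia.
  exists a0; split => //; split => // n h; apply: hno; by exists n.
have cA : forall n, continuous (a1 n) by move=> n; exact: Acont _ (Aa1 n).
have nU : nbhs (tg_one gs) U by apply: open_nbhs_nbhs; split.
have [U0 [nU0 clU0]] := closure_sub nU.
have [A1 [B1 [nA1 nB1 hAB1]]] := near_gmul nU0.
have [A2 [B2 [nA2 nB2 hAB2]]] := near_gmul nB1.
have [Wp [[oWp Wp1] Wpsub]] : exists Wp, open_nbhs (tg_one gs) Wp /\ Wp `<=` tg_inv gs @^-1` A1.
  by have := near_ginv nA1; rewrite nbhsE => -[B oB BA]; exists B.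
pose Wt := tg_inv gs @^-1` B2.
have nWt : nbhs (tg_one gs) Wt := near_ginv nB2.
have far : forall p g t, Wp p -> ~ U0 g -> Wt t -> ~ A2 (tg_mul gs (tg_mul gs p g) t).
  move=> p g t Wpp nU0g Wtt Vq.
  have B1q : B1 (tg_mul gs p g) by rewrite -(gmulrK gs (tg_mul gs p g) t); exact: hAB2.
  apply: nU0g; rewrite -(gmulKV gs p g); apply: hAB1 => //; exact: Wpsub.

have hpow : forall n, exists yk : X * int, ~ closure U0 (zp gs (a1 n yk.1) yk.2).
  move=> n; have [y ne] : exists y, a1 n y <> tg_one gs.
    apply: contrapT => hy; apply: (na1 n); apply: funext => y.
    apply: contrapT => ne; apply: hy; by exists y.
  have [k hk] := nss_pow nssU ne; exists (y, k) => /=.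
  by move=> /clU0.
have [yk hyk] := choice hpow.
have nBs : forall n, nbhs (yk n).1 [set y | ~ closure U0 (zp gs (a1 n y) (yk n).2)].
  move=> n.
  have nO : nbhs (zp gs (a1 n (yk n).1) (yk n).2) (~` closure U0).
    apply: open_nbhs_nbhs; split; last exact: hyk.
    apply: closed_openC; exact: closed_closure.
  exact: (@cont_zp X G gs _ (yk n).2 (cA n) (yk n).1 _ nO).
have [x hx] := pc_cluster crs pc nBs.
have [N0 hN0] := evone oU U1 nssU abP ia1 Aa1 x.
pose b n := a1 (N0 + n).
have ib : injective b by move=> m n /ia1 /eqP; rewrite eqn_add2l => /eqP.
have Ab : forall n, A (b n) by move=> n; exact: Aa1.
have cb : forall n, continuous (b n) by move=> n; exact: cA.
have bx : forall n, b n x = tg_one gs by move=> n; apply: hN0; exact: leq_addr.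
pose kb n := (yk (N0 + n)).2.
have hxb : forall N, nbhs x N -> forall K, exists n, (K <= n)%N /\
    exists z, ~ closure U0 (zp gs (b n z) (kb n)) /\ N z.
  move=> N nN K; have [j [Kj [z [Bz Nz]]]] := hx N nN (N0 + K).
  exists (j - N0); split; first by lia.
  rewrite /b /kb (_ : N0 + (j - N0) = j)%N; last by lia.
  by exists z.
have [Nf hNf] := choice (evone oU U1 nssU abP ib Ab).
pose Cond j (h : nat -> nat * X) (t : nat * X) :=
  [/\ forall i, (i < j)%N -> ((h i).1 < t.1)%N /\ (Nf (h i).2 <= t.1)%N,
      ~ closure U0 (zp gs (b t.1 t.2) (kb t.1)) &
      forall J, (J <= j)%N ->
        Wp (Qp gs (fun i => zp gs (b (h (J + i)).1 t.2) (kb (h (J + i)).1)) (j - J))].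
have exC : forall j h, exists t, Cond j h t.
  move=> j h.
  have [M hM] := bound_fin (fun i => maxn ((h i).1).+1 (Nf (h i).2)) j.
  have nR : nbhs x [set y | forall J, (J <= j)%N ->
      Wp (Qp gs (fun i => zp gs (b (h (J + i)).1 y) (kb (h (J + i)).1)) (j - J))].
    apply: nbhs_fin => J _.
    have c := @cont_Q X G gs (fun i => b (h (J + i)).1) (fun i => kb (h (J + i)).1) (j - J)
      (fun i => cb _) x.
    apply: c => /=.
    rewrite Qone; first exact: open_nbhs_nbhs.
    by move=> i _; rewrite bx zp_one.
  have [n [Mn [z [Bz Rz]]]] := hxb _ nR M.+1.
  exists (n, z); split => //= i ij.
  by move: (hM i ij); rewrite geq_max => /andP[h1 h2]; split; lia.
have [s hs] := dep_choice (0%N, x) exC.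
pose nj j := (s j).1.
pose yj j := (s j).2.
have incr : forall i j, (i < j)%N -> (nj i < nj j)%N /\ (Nf (yj i) <= nj j)%N.
  by move=> i j ij; have [h1 _ _] := hs j; have := h1 i ij; rewrite ij.
have farj : forall j, ~ closure U0 (zp gs (b (nj j) (yj j)) (kb (nj j))).
  by move=> j; have [_ h2 _] := hs j.
have pre : forall j J, (J <= j)%N ->
    Wp (Qp gs (fun i => zp gs (b (nj (J + i)) (yj j)) (kb (nj (J + i)))) (j - J)).
  move=> j J Jj; have [_ _ h3] := hs j; have := h3 J Jj.
  rewrite (@Qext _ gs _ (fun i => zp gs (b (nj (J + i)) (yj j)) (kb (nj (J + i)))) (j - J)) //.
  move=> i hi /=; have -> : (J + i < j)%N by lia.
  by [].
have inj_nj : injective nj.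
  move=> i j e; case: (ltngtP i j) => // h.
    by have := (incr _ _ h).1; rewrite e ltnn.
  by have := (incr _ _ h).1; rewrite e ltnn.
pose c j := b (nj j).
pose w j := kb (nj j).
have ic : injective c by move=> i j /ib /inj_nj.
have hT : forall J, exists T : X -> G, continuous T /\
    forall y, (fun k => Qp gs (fun i => zp gs (c (J + i) y) (w (J + i))) k.+1) @ \oo --> T y.
  move=> J.
  have [l [cl hl]] := abP (fun i => c (J + i)) (fun i => w (J + i))
    (fun i1 i2 e => addnI (ic _ _ e)) (fun i => Ab _).
  exists l; split => // y.
  apply: (cvg_trans _ (hl y)); apply: near_eq_cvg; apply: nearW => k /=.
  by rewrite cp_pp.
have [T hTf] := choice hT.

have Tone : forall j, T j.+1 (yj j) = tg_one gs.
  move=> j; have [_ hl] := hTf j.+1.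
  rewrite (lim_evconst hG (hl (yj j)) (N := 0%N)) //.
  move=> i _ /=; rewrite /c.
  rewrite (hNf (yj j)) ?zp_one //.
  by have := (incr j (j.+1 + i) _).2; apply; lia.
have decomp : forall y j J, (J <= j)%N ->
    T J y = tg_mul gs (tg_mul gs (Qp gs (fun i => zp gs (c (J + i) y) (w (J + i))) (j - J))
                                 (zp gs (c j y) (w j))) (T j.+1 y).
  move=> y j J Jj; have [_ hl] := hTf J; have [_ hl'] := hTf j.+1.
  have hl'' : (fun k => Qp gs (fun i => zp gs (c (J + ((j - J).+1 + i)) y)
                          (w (J + ((j - J).+1 + i)))) k.+1) @ \oo --> T j.+1 y.
    have e : forall i, (J + ((j - J).+1 + i) = j.+1 + i)%N by move=> i; lia.
    have -> : (fun i => zp gs (c (J + ((j - J).+1 + i)) y) (w (J + ((j - J).+1 + i)))) =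
              (fun i => zp gs (c (j.+1 + i) y) (w (j.+1 + i))).
      by apply: funext => i; rewrite e.
    exact: hl'.
  rewrite (lim_shift hG (hl y) hl'') /=.
  by rewrite subnKC.
pose O j := [set y | (forall J, (J <= j)%N ->
      Wp (Qp gs (fun i => zp gs (c (J + i) y) (w (J + i))) (j - J))) /\
    ~ closure U0 (zp gs (c j y) (w j)) /\ Wt (T j.+1 y)].
have nO : forall j, nbhs (yj j) (O j).
  move=> j.
  have n1 : nbhs (yj j) [set y | forall J, (J <= j)%N ->
      Wp (Qp gs (fun i => zp gs (c (J + i) y) (w (J + i))) (j - J))].
    apply: nbhs_fin => J Jj.
    have hc := @cont_Q X G gs (fun i => c (J + i)) (fun i => w (J + i)) (j - J)
      (fun i => cb _) (yj j).
    apply: hc => /=; apply: open_nbhs_nbhs; split => //.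
    exact: pre.
  have n2 : nbhs (yj j) [set y | ~ closure U0 (zp gs (c j y) (w j))].
    have nO : nbhs (zp gs (c j (yj j)) (w j)) (~` closure U0).
      apply: open_nbhs_nbhs; split; last exact: farj.
      apply: closed_openC; exact: closed_closure.
    exact: (@cont_zp X G gs _ (w j) (cb _) (yj j) _ nO).
  have n3 : nbhs (yj j) [set y | Wt (T j.+1 y)].
    have [cT _] := hTf j.+1.
    apply: (cT (yj j)); rewrite Tone; exact: nWt.
  by apply: filterS (filterI n1 (filterI n2 n3)) => y [h1 [h2 h3]].
have farO : forall j y J, O j y -> (J <= j)%N -> ~ A2 (T J y).
  move=> j y J [h1 [h2 h3]] Jj; rewrite (decomp y j J Jj).
  apply: far => //; first exact: h1.
  by move=> h; apply: h2; exact: subset_closure.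
have [x' hx'] := pc_cluster crs pc nO.
have [J' hJ'] := evone oU U1 nssU abP ic (fun j => Ab _) x'.
have TJ : T J' x' = tg_one gs.
  have [_ hl] := hTf J'.
  rewrite (lim_evconst hG (hl x') (N := 0%N)) //.
  by move=> i _ /=; rewrite hJ' ?zp_one // leq_addr.
have nV : nbhs x' [set y | A2 (T J' y)].
  have [cT _] := hTf J'.
  apply: (cT x'); rewrite TJ; exact: nA2.
have [j [Jj [z [Oz Vz]]]] := hx' _ nV J'.
exact: (farO j z J' Oz Jj Vz).
Qed.
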